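(* Let $M\ge 0$ be an integer, let $a_0,\dots,a_M\in\mathbb{R}$ and let $f_M(x)=\sum_{m=0}^M a_m T_m(x)$, where $T_m(x)=\cos(m\arccos x)$ is the $m$-th Chebyshev polynomial. For each integer $n\ge 0$ and $y\in[-1,1]$ define $$\tilde R_n(y)=\int_{-1}^{y} f_M(y-1-t)\,T_n(t)\,\mathrm{d}t ,$$ i.e. $\tilde R_n(y)$ is the convolution $\int_{-1}^{x+1}f_M(x-t)T_n(t)\,\mathrm{d}t$ evaluated at $x=y-1\in[-2,0]$. Then for all $y\in[-1,1]$: $$\tilde R_0(y)=\int_{-1}^{y} f_M(t)\,\mathrm{d}t,$$ $$\tilde R_1(y)=\int_{-1}^{y}\tilde R_0(s)\,\mathrm{d}s-\tilde R_0(y),$$ $$\tilde R_2(y)=4\int_{-1}^{y}\tilde R_1(s)\,\mathrm{d}s+\tilde R_0(y),$$ and for every $n\ge 2$, $$\tilde R_{n+1}(y)=2(n+1)\int_{-1}^{y}\tilde R_n(s)\,\mathrm{d}s+\frac{n+1}{n-1}\tilde R_{n-1}(y)+\frac{2(-1)^n}{n-1}\int_{-1}^{y} f_M(t)\,\mathrm{d}t.$$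
   Context: $T_m$ denotes the Chebyshev polynomial of the first kind of degree $m$ on $[-1,1]$. The function $\tilde R_n$ is the (left-sided, Volterra-type) convolution of $f_M$ and $T_n$, shifted from $x\in[-2,0]$ to $y=x+1\in[-1,1]$. *)

(* Defs.v *)
From Stdlib Require Import Reals.
From Coquelicot Require Import Coquelicot.
Open Scope R_scope.

Definition cheb (m : nat) (x : R) : R := cos (INR m * acos x).

(* f_M(x) = sum_{m=0}^M a_m T_m(x)   (sum_f_R0 g M = g 0 + ... + g M) *)
Definition fM (a : nat -> R) (M : nat) (x : R) : R :=
  sum_f_R0 (fun m => a m * cheb m x) M.

Definition Rtilde (a : nat -> R) (M n : nat) (y : R) : R :=
  RInt (fun t => fM a M (y - 1 - t) * cheb n t) (-1) y.

(* Main.v *)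
Require Import Defs.
From Stdlib Require Import Reals Lra Lia.
From Coquelicot Require Import Coquelicot.
Open Scope R_scope.

Lemma der_mult (f g : R->R) (x df dg : R) : is_derive f x df -> is_derive g x dg ->
  is_derive (fun t => f t * g t) x (df * g x + f x * dg).
Proof. intros H1 H2. apply (is_derive_mult f g x df dg H1 H2). intros; apply Rmult_comm. Qed.
Lemma der_plus (f g : R->R) (x df dg : R) : is_derive f x df -> is_derive g x dg ->
  is_derive (fun t => f t + g t) x (df + dg).
Proof. intros H1 H2. apply (is_derive_plus f g x df dg H1 H2). Qed.
Lemma der_const (c x : R) : is_derive (fun _ : R => c) x 0.
Proof. apply (@is_derive_const R_AbsRing R_NormedModule c x). Qed.
Lemma der_id (x : R) : is_derive (fun t : R => t) x 1.
Proof. apply (@is_derive_id R_AbsRing x). Qed.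
Lemma eqR (x y : R) : x = y -> x = y.
Proof. auto. Qed.

Lemma der_val (f : R -> R) (x l l' : R) : is_derive f x l -> l = l' -> is_derive f x l'.
Proof. intros H ->; exact H. Qed.
Lemma cont_mult (f g : R->R) (x : R) : continuous f x -> continuous g x -> continuous (fun t => f t * g t) x.
Proof. intros H1 H2. apply (continuous_mult f g x H1 H2). Qed.

Lemma cont_ext (f g : R -> R) (x : R) : (forall t, f t = g t) -> continuous f x -> continuous g x.
Proof. intros H. apply (continuous_ext f g x H). Qed.

Inductive PolyD : (R->R) -> (R->R) -> Prop :=
| PD_const (c : R) (f df : R -> R) : (forall x : R, f x = c) -> (forall x : R, df x = 0) -> PolyD f df
| PD_id (f df : R -> R) : (forall x : R, f x = x) -> (forall x : R, df x = 1) -> PolyD f df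
| PD_add (f df g dg h dh : R -> R) : PolyD f df -> PolyD g dg -> (forall x : R, h x = f x + g x) ->
    (forall x : R, dh x = df x + dg x) -> PolyD h dh
| PD_mul (f df g dg h dh : R -> R) : PolyD f df -> PolyD g dg -> (forall x : R, h x = f x * g x) ->
    (forall x : R, dh x = df x * g x + f x * dg x) -> PolyD h dh.

Lemma polyD_derive (f df : R -> R) : PolyD f df -> forall x : R, is_derive f x (df x).
Proof.
  induction 1; intros x.
  - apply der_val with 0. apply is_derive_ext with (fun _ => c). intros; auto. apply der_const. auto.
  - apply der_val with 1. apply is_derive_ext with (fun t => t). intros; auto. apply der_id. auto.
  - apply der_val with (df x + dg x). apply is_derive_ext with (fun t => f t + g t). intros; auto.
    apply der_plus; auto. auto.
  - apply der_val with (df x * g x + f x * dg x). apply is_derive_ext with (fun t => f t * g t). intros; auto.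
    apply der_mult; auto. auto.
Qed.

Lemma polyD_cont (f df : R -> R) : PolyD f df -> forall x : R, continuous f x.
Proof. intros H x. apply (@ex_derive_continuous R_AbsRing R_NormedModule). exists (df x). apply (polyD_derive f df H x). Qed.

Lemma polyD_dpoly f df : PolyD f df -> exists ddf, PolyD df ddf.
Proof.
  induction 1 as [c f df H H0|f df H H0|f df g dg h dh Hf IHPolyD1 Hg IHPolyD2 H H0|f df g dg h dh H IHPolyD1 H0 IHPolyD2 H1 H2].
  - exists (fun _ => 0). apply PD_const with 0; auto.
  - exists (fun _ => 0). apply PD_const with 1; auto.
  - destruct IHPolyD1 as [a Ha], IHPolyD2 as [b Hb]. exists (fun x => a x + b x).
    apply PD_add with df a dg b; auto.
  - destruct IHPolyD1 as [a Ha], IHPolyD2 as [b Hb].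
    exists (fun x => (a x * g x + df x * dg x) + (df x * dg x + f x * b x)).
    eapply PD_add. eapply PD_mul. exact Ha. exact H0. intros; reflexivity. intros; reflexivity.
    eapply PD_mul. exact H. exact Hb. intros; reflexivity. intros; reflexivity.
    auto. auto.
Qed.

Lemma polyD_lin f df g dg a b : PolyD f df -> PolyD g dg ->
  PolyD (fun x => a * f x + b * g x) (fun x => a * df x + b * dg x).
Proof.
  intros Hf Hg. eapply PD_add.
  eapply PD_mul. apply PD_const with a; [intros; reflexivity| intros; reflexivity]. exact Hf.
  intros; reflexivity. intros; reflexivity.
  eapply PD_mul. apply PD_const with b; [intros; reflexivity| intros; reflexivity]. exact Hg.
  intros; reflexivity. intros; reflexivity.
  intros; reflexivity. intros; simpl; ring.
Qed.

Inductive Sep2 : (R -> R -> R) -> (R -> R -> R) -> Prop :=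
| S2_base (K dK : R -> R -> R) (p dp q : R -> R) : (forall x : R, is_derive p x (dp x)) -> (forall x : R, continuous q x) ->
   (forall y u : R, K y u = p y * q u) -> (forall y u : R, dK y u = dp y * q u) -> Sep2 K dK
| S2_add (K dK K1 dK1 K2 dK2 : R -> R -> R) : Sep2 K1 dK1 -> Sep2 K2 dK2 ->
   (forall y u : R, K y u = K1 y u + K2 y u) -> (forall y u : R, dK y u = dK1 y u + dK2 y u) -> Sep2 K dK.

Lemma sep2_cont (K dK : R -> R -> R) : Sep2 K dK -> forall z u : R, continuous (K z) u /\ continuous (dK z) u.
Proof.
  induction 1; intros z u; split.
  - apply continuous_ext with (fun u => p z * q u). intros; auto.
    apply cont_mult. apply continuous_const. auto.
  - apply continuous_ext with (fun u => dp z * q u). intros; auto.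
    apply cont_mult. apply continuous_const. auto.
  - apply continuous_ext with (fun u => K1 z u + K2 z u). intros; auto.
    apply (continuous_plus (K1 z) (K2 z)); [apply IHSep2_1|apply IHSep2_2].
  - apply continuous_ext with (fun u => dK1 z u + dK2 z u). intros; auto.
    apply (continuous_plus (dK1 z) (dK2 z)); [apply IHSep2_1|apply IHSep2_2].
Qed.

Lemma sep2_mul_base p dp q : (forall x, is_derive p x (dp x)) -> (forall x, continuous q x) ->
  forall L dL, Sep2 L dL -> forall M dM,
  (forall y u, M y u = p y * q u * L y u) ->
  (forall y u, dM y u = dp y * q u * L y u + p y * q u * dL y u) -> Sep2 M dM.
Proof.
  intros Hp Hq. induction 1; intros M dM HM HdM.
  - apply S2_base with (fun y => p y * p0 y) (fun y => dp y * p0 y + p y * dp0 y) (fun u => q u * q0 u).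
    + intros; apply der_mult; auto.
    + intros; apply cont_mult; auto.
    + intros; rewrite HM, H1; ring.
    + intros; rewrite HdM, H1, H2; ring.
  - apply S2_add with (fun y u => p y * q u * K1 y u) (fun y u => dp y * q u * K1 y u + p y * q u * dK1 y u)
      (fun y u => p y * q u * K2 y u) (fun y u => dp y * q u * K2 y u + p y * q u * dK2 y u).
    + apply IHSep2_1; auto.
    + apply IHSep2_2; auto.
    + intros; rewrite HM, H1; ring.
    + intros; rewrite HdM, H1, H2; ring.
Qed.

Lemma sep2_mul K dK : Sep2 K dK -> forall L dL, Sep2 L dL -> forall M dM,
  (forall y u, M y u = K y u * L y u) ->
  (forall y u, dM y u = dK y u * L y u + K y u * dL y u) -> Sep2 M dM.
Proof.
  induction 1; intros L dL HL M dM HM HdM.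
  - apply (sep2_mul_base p dp q H H0 L dL HL).
    + intros; rewrite HM, H1; ring.
    + intros; rewrite HdM, H1, H2; ring.
  - apply S2_add with (fun y u => K1 y u * L y u) (fun y u => dK1 y u * L y u + K1 y u * dL y u)
      (fun y u => K2 y u * L y u) (fun y u => dK2 y u * L y u + K2 y u * dL y u).
    + eapply IHSep2_1; eauto.
    + eapply IHSep2_2; eauto.
    + intros; rewrite HM, H1; ring.
    + intros; rewrite HdM, H1, H2; ring.
Qed.

Lemma polyD_sep2 f df : PolyD f df -> Sep2 (fun y u => f (y - 1 - u)) (fun y u => df (y - 1 - u)).
Proof.
  induction 1.
  - apply S2_base with (fun _ => c) (fun _ => 0) (fun _ => 1).
    + intros; apply der_const.
    + intros; apply continuous_const.
    + intros; rewrite H; ring.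
    + intros; rewrite H0; ring.
  - apply S2_add with (fun y u => (y - 1) * 1) (fun y u => 1 * 1) (fun y u => 1 * (- u)) (fun y u => 0 * (-u)).
    + apply S2_base with (fun y => y - 1) (fun _ => 1) (fun _ => 1); try (intros; reflexivity).
      intros; auto_derive; auto; ring. intros; apply continuous_const.
    + apply S2_base with (fun _ => 1) (fun _ => 0) (fun u => - u); try (intros; reflexivity).
      intros; apply der_const.
      intros. apply cont_ext with (fun u => (-1) * u); [intros t; ring | apply cont_mult; [apply continuous_const|apply continuous_id]].
    + intros; rewrite H; ring.
    + intros; rewrite H0; ring.
  - apply S2_add with (fun y u => f (y - 1 - u)) (fun y u => df (y - 1 - u))
       (fun y u => g (y - 1 - u)) (fun y u => dg (y - 1 - u)); auto; intros y u; cbv beta; auto.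
  - eapply sep2_mul. exact IHPolyD1. exact IHPolyD2. intros y u; cbv beta; auto. intros y u; cbv beta; auto.
Qed.

Lemma exR (h : R -> R) a b : (forall x, continuous h x) -> ex_RInt h a b.
Proof. intros H. apply (@ex_RInt_continuous R_CompleteNormedModule). intros; apply H. Qed.

Lemma RInt_ext_R (f g : R -> R) a b : (forall x, Rmin a b < x < Rmax a b -> f x = g x) -> RInt f a b = RInt g a b.
Proof. intros H. apply (RInt_ext f g a b H). Qed.

Lemma RInt_scal_l (h : R -> R) c a b : ex_RInt h a b -> RInt (fun u => c * h u) a b = c * RInt h a b.
Proof. intros H. apply (RInt_scal h a b c H). Qed.

Lemma RInt_plus_R (h1 h2 : R -> R) a b : ex_RInt h1 a b -> ex_RInt h2 a b ->
  RInt (fun u => h1 u + h2 u) a b = RInt h1 a b + RInt h2 a b.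
Proof. intros H1 H2. apply (RInt_plus h1 h2 a b H1 H2). Qed.

Lemma der_RInt (h : R -> R) (y : R) : (forall x, continuous h x) ->
  is_derive (fun z => RInt h (-1) z) y (h y).
Proof.
  intros H. apply (is_derive_RInt h (fun z => RInt h (-1) z) (-1) y).
  apply filter_forall. intros b. apply (@RInt_correct R_CompleteNormedModule). apply exR; auto.
  apply H.
Qed.

Lemma sep2_deriv (f : R -> R) (Hf : forall x : R, continuous f x) (K dK : R -> R -> R) : Sep2 K dK -> forall y : R,
  is_derive (fun z : R => RInt (fun u => f u * K z u) (-1) z) y
    (f y * K y y + RInt (fun u => f u * dK y u) (-1) y).
Proof.
  induction 1 as [K dK p dp q Hp Hq HK HdK | K dK K1 dK1 K2 dK2 H1 IH1 H2 IH2 HK HdK]; intros y.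
  - assert (Hc : forall x, continuous (fun u => f u * q u) x).
    { intros; apply cont_mult; auto. }
    apply is_derive_ext with (fun z => p z * RInt (fun u => f u * q u) (-1) z).
    { intros t. rewrite <- RInt_scal_l by (apply exR; auto). apply RInt_ext_R. intros; rewrite HK; ring. }
    eapply der_val. apply der_mult. apply Hp. apply der_RInt. exact Hc.
    rewrite HK. replace (RInt (fun u => f u * dK y u) (-1) y) with (dp y * RInt (fun u => f u * q u) (-1) y).
    ring.
    rewrite <- RInt_scal_l by (apply exR; auto). apply RInt_ext_R. intros; rewrite HdK; ring.
  - assert (Hc1 : forall z x, continuous (fun u => f u * K1 z u) x).
    { intros; apply cont_mult; auto. apply (sep2_cont _ _ H1). }
    assert (Hc2 : forall z x, continuous (fun u => f u * K2 z u) x).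
    { intros; apply cont_mult; auto. apply (sep2_cont _ _ H2). }
    assert (Hd1 : forall z x, continuous (fun u => f u * dK1 z u) x).
    { intros; apply cont_mult; auto. apply (sep2_cont _ _ H1). }
    assert (Hd2 : forall z x, continuous (fun u => f u * dK2 z u) x).
    { intros; apply cont_mult; auto. apply (sep2_cont _ _ H2). }
    apply is_derive_ext with (fun z => RInt (fun u => f u * K1 z u) (-1) z + RInt (fun u => f u * K2 z u) (-1) z).
    { intros t. rewrite <- RInt_plus_R by (apply exR; auto). apply RInt_ext_R. intros; rewrite HK; ring. }
    eapply der_val. apply der_plus. apply IH1. apply IH2.
    rewrite HK. replace (RInt (fun u => f u * dK y u) (-1) y) with
      (RInt (fun u => f u * dK1 y u) (-1) y + RInt (fun u => f u * dK2 y u) (-1) y).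
    ring.
    rewrite <- RInt_plus_R by (apply exR; auto). apply RInt_ext_R. intros; rewrite HdK; ring.
Qed.

Definition Dc (f h : R -> R) (y : R) : R := RInt (fun u => f u * h (y - 1 - u)) (-1) y.

Lemma conv_main (f : R -> R) (Hf : forall x, continuous f x) G g h :
  PolyD G g -> G (-1) = 0 -> (forall x, g x = h x) ->
  forall y, RInt (fun s => Dc f h s) (-1) y = Dc f G y.
Proof.
  intros HG HG1 Hgh y.
  destruct (polyD_dpoly G g HG) as [dg Hg].
  pose proof (sep2_deriv f Hf _ _ (polyD_sep2 G g HG)) as D1.
  pose proof (sep2_deriv f Hf _ _ (polyD_sep2 g dg Hg)) as D2.
  rewrite (RInt_ext_R (fun s => Dc f h s) (fun s => Dc f g s)).
  2:{ intros x _. unfold Dc. apply RInt_ext_R. intros; rewrite Hgh; reflexivity. }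
  apply is_RInt_unique.
  replace (Dc f G y) with (minus (Dc f G y) (Dc f G (-1))).
  2:{ unfold Dc at 2. rewrite RInt_point. change (Dc f G y - 0 = Dc f G y). ring. }
  apply (is_RInt_derive (Dc f G) (Dc f g)).
  - intros x _. eapply der_val. apply (D1 x). cbv beta.
    replace (x - 1 - x) with (-1) by ring. rewrite HG1. unfold Dc. ring.
  - intros x _. apply (@ex_derive_continuous R_AbsRing R_NormedModule). eexists. apply (D2 x).
Qed.

Fixpoint chebP (n : nat) (x : R) : R :=
  match n with
  | O => 1
  | S m => match m with O => x | S k => 2 * x * chebP m x - chebP k x end
  end.

Fixpoint chebU (n : nat) (x : R) : R :=
  match n with
  | O => 1
  | S m => match m with O => 2 * x | S k => 2 * x * chebU m x - chebU k x end
  end.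

Definition dT (n : nat) (x : R) : R :=
  match n with O => 0 | S k => INR (S k) * chebU k x end.

Lemma rec_eq (a b : nat -> R) (x : R) :
  (forall m, a (S (S m)) = 2 * x * a (S m) - a m) ->
  (forall m, b (S (S m)) = 2 * x * b (S m) - b m) ->
  a 0%nat = b 0%nat -> a 1%nat = b 1%nat -> forall m, a m = b m.
Proof.
  intros Ha Hb H0 H1.
  assert (forall m, a m = b m /\ a (S m) = b (S m)) as H.
  { induction m as [|m [IH1 IH2]]. split; auto. split; auto. rewrite Ha, Hb, IH1, IH2; reflexivity. }
  intros m; apply H.
Qed.

Lemma idA (m : nat) (x : R) : chebP (S (S m)) x = x * chebU (S m) x - chebU m x.
Proof.
  revert m. apply (rec_eq (fun m => chebP (S (S m)) x) (fun m => x * chebU (S m) x - chebU m x) x).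
  - intros m. reflexivity.
  - intros m. simpl. ring.
  - simpl. ring.
  - simpl. ring.
Qed.

Lemma idB (m : nat) (x : R) : chebP (S m) x = chebU (S m) x - x * chebU m x.
Proof.
  revert m. apply (rec_eq (fun m => chebP (S m) x) (fun m => chebU (S m) x - x * chebU m x) x).
  - intros m. reflexivity.
  - intros m. simpl. ring.
  - simpl. ring.
  - simpl. ring.
Qed.

Lemma idTU (k : nat) (x : R) : 2 * chebP (S (S k)) x = chebU (S (S k)) x - chebU k x.
Proof. pose proof (idA k x) as E1. pose proof (idB (S k) x) as E2. replace (2 * chebP (S (S k)) x) with (chebP (S (S k)) x + chebP (S (S k)) x) by ring. rewrite E1 at 1. rewrite E2. ring. Qed.

Lemma idTU' (k : nat) (x : R) : chebP (S (S k)) x = / 2 * chebU (S (S k)) x - / 2 * chebU k x.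
Proof. pose proof (idTU k x). lra. Qed.

Lemma chebP_m1 (m : nat) : chebP m (-1) = (-1) ^ m.
Proof.
  revert m. apply (rec_eq (fun m => chebP m (-1)) (fun m => (-1) ^ m) (-1)).
  - intros m. reflexivity.
  - intros m. simpl. ring.
  - reflexivity.
  - simpl. ring.
Qed.

Lemma dT_rec (n : nat) (x : R) : dT (S (S n)) x = 2 * chebP (S n) x + 2 * x * dT (S n) x - dT n x.
Proof.
  destruct n as [|m].
  - simpl. ring.
  - unfold dT. rewrite (idA m x).
    change (chebU (S (S m)) x) with (2 * x * chebU (S m) x - chebU m x).
    rewrite !S_INR. ring.
Qed.

Lemma chebP_poly (n : nat) : PolyD (chebP n) (dT n).
Proof.
  assert (forall n, PolyD (chebP n) (dT n) /\ PolyD (chebP (S n)) (dT (S n))) as H.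
  2: apply H.
  clear n. induction n as [|n [IH1 IH2]].
  - split.
    + apply PD_const with 1; intros; reflexivity.
    + apply PD_id; intros; simpl; ring.
  - split; auto.
    apply PD_add with (fun x => 2*x*chebP (S n) x) (fun x => 2*chebP (S n) x + 2*x*dT (S n) x)
      (fun x => -1 * chebP n x) (fun x => -1 * dT n x).
    + apply PD_mul with (fun x => 2*x) (fun _ => 2) (chebP (S n)) (dT (S n)).
      * apply PD_mul with (fun _ => 2) (fun _ => 0) (fun x => x) (fun _ => 1).
        apply PD_const with 2; intros; reflexivity.
        apply PD_id; intros; reflexivity.
        intros; reflexivity. intros; cbv beta; ring.
      * exact IH2.
      * intros; reflexivity.
      * intros; cbv beta; ring.
    + apply PD_mul with (fun _ => -1) (fun _ => 0) (chebP n) (dT n).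
      * apply PD_const with (-1); intros; reflexivity.
      * exact IH1.
      * intros; reflexivity.
      * intros; cbv beta; ring.
    + intros; cbv beta; change (chebP (S (S n)) x) with (2 * x * chebP (S n) x - chebP n x); ring.
    + intros; cbv beta; rewrite dT_rec; ring.
Qed.

Lemma cont_plus (f g : R->R) (x : R) : continuous f x -> continuous g x -> continuous (fun t => f t + g t) x.
Proof. intros H1 H2. apply (continuous_plus f g x H1 H2). Qed.

Lemma cont_aff (F : R -> R) (y : R) : (forall x, continuous F x) -> forall u : R, continuous (fun u => F (y - 1 - u)) u.
Proof.
  intros HF u. apply (continuous_comp (fun u : R => y - 1 - u) F u).
  apply (@ex_derive_continuous R_AbsRing R_NormedModule). auto_derive; auto.
  apply HF.
Qed.

Lemma Dc_ext (f A B : R -> R) y : (forall x, A x = B x) -> Dc f A y = Dc f B y.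
Proof. intros H. unfold Dc. apply RInt_ext_R. intros; rewrite H; reflexivity. Qed.

Lemma Dc_lin (f A B : R -> R) (al be y : R) : (forall x, continuous f x) ->
  (forall x, continuous A x) -> (forall x, continuous B x) ->
  Dc f (fun x => al * A x + be * B x) y = al * Dc f A y + be * Dc f B y.
Proof.
  intros Hf HA HB. unfold Dc.
  assert (E1 : ex_RInt (fun u => f u * A (y - 1 - u)) (-1) y).
  { apply exR. intros; apply cont_mult; auto. apply cont_aff; auto. }
  assert (E2 : ex_RInt (fun u => f u * B (y - 1 - u)) (-1) y).
  { apply exR. intros; apply cont_mult; auto. apply cont_aff; auto. }
  rewrite <- (RInt_scal_l _ al) by exact E1.
  rewrite <- (RInt_scal_l _ be) by exact E2.
  rewrite <- RInt_plus_R.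
  apply RInt_ext_R; intros; ring.
  apply (ex_RInt_scal (fun u => f u * A (y - 1 - u)) (-1) y al E1).
  apply (ex_RInt_scal (fun u => f u * B (y - 1 - u)) (-1) y be E2).
Qed.

Lemma subst_conv (F h : R -> R) (y : R) : (forall x, continuous F x) -> (forall x, continuous h x) ->
  RInt (fun t => F (y - 1 - t) * h t) (-1) y = Dc F h y.
Proof.
  intros HF Hh. unfold Dc.
  set (Phi := fun u => F u * h (y - 1 - u)).
  assert (HP : forall a b, ex_RInt Phi a b).
  { intros; apply exR. intros; unfold Phi; apply cont_mult; auto. apply cont_aff; auto. }
  assert (H := RInt_comp_lin Phi (-1) (y - 1) (-1) y).
  replace (-1 * -1 + (y - 1)) with y in H by ring.
  replace (-1 * y + (y - 1)) with (-1) in H by ring.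
  specialize (H (HP _ _)).
  change (RInt (fun u => F u * h (y - 1 - u)) (-1) y) with (RInt Phi (-1) y).
  rewrite <- (opp_RInt_swap Phi y (-1) (HP _ _)).
  rewrite <- H.
  rewrite (RInt_ext_R (fun y0 => scal (-1) (Phi (-1 * y0 + (y - 1)))) (fun t => -1 * (F (y - 1 - t) * h t))).
  2:{ intros t _. unfold Phi. replace (-1 * t + (y - 1)) with (y - 1 - t) by ring.
      replace (y - 1 - (y - 1 - t)) with t by ring. reflexivity. }
  rewrite RInt_scal_l.
  assert (Hr : forall X : R, X = - (-1 * X)) by (intros; ring). apply Hr.
  apply exR. intros; apply cont_mult; auto. apply cont_aff; auto.
Qed.

Definition fP (a : nat -> R) (M : nat) (x : R) : R := sum_f_R0 (fun m => a m * chebP m x) M.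

Lemma chebP_cont n x : continuous (chebP n) x.
Proof. apply (polyD_cont _ _ (chebP_poly n)). Qed.

Lemma fP_cont a M x : continuous (fP a M) x.
Proof.
  unfold fP. induction M as [|M IH].
  - apply cont_ext with (fun x => a 0%nat * chebP 0 x). intros; reflexivity.
    apply cont_mult. apply continuous_const. apply chebP_cont.
  - apply cont_ext with (fun x => sum_f_R0 (fun m => a m * chebP m x) M + a (S M) * chebP (S M) x).
    intros; reflexivity.
    apply cont_plus. exact IH. apply cont_mult. apply continuous_const. apply chebP_cont.
Qed.

Definition Rp a M n y := Dc (fP a M) (chebP n) y.

Lemma Rp0 a M y : Rp a M 0 y = RInt (fP a M) (-1) y.
Proof. unfold Rp, Dc. apply RInt_ext_R. intros; simpl; ring. Qed.

Lemma P1 a M y : RInt (fun s => Rp a M 0 s) (-1) y = Rp a M 1 y + Rp a M 0 y.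
Proof.
  unfold Rp. rewrite (conv_main (fP a M) (fP_cont a M) (fun x => 1 * chebP 1 x + 1 * chebP 0 x)
     (fun x => 1 * dT 1 x + 1 * dT 0 x) (chebP 0)).
  - rewrite Dc_lin; try (intros; apply fP_cont); try (intros; apply chebP_cont). apply eqR; ring.
  - apply polyD_lin; apply chebP_poly.
  - simpl; ring.
  - intros; simpl; ring.
Qed.

Lemma P2 a M y : RInt (fun s => Rp a M 1 s) (-1) y = / 4 * Rp a M 2 y + - / 4 * Rp a M 0 y.
Proof.
  unfold Rp. rewrite (conv_main (fP a M) (fP_cont a M) (fun x => / 4 * chebP 2 x + - / 4 * chebP 0 x)
     (fun x => / 4 * dT 2 x + - / 4 * dT 0 x) (chebP 1)).
  - rewrite Dc_lin; try (intros; apply fP_cont); try (intros; apply chebP_cont). reflexivity.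
  - apply polyD_lin; apply chebP_poly.
  - simpl; field.
  - intros; simpl; field.
Qed.

Lemma Pn a M k y : RInt (fun s => Rp a M (S (S k)) s) (-1) y =
  1 * (/ (2 * INR (S (S (S k)))) * Rp a M (S (S (S k))) y + - / (2 * INR (S k)) * Rp a M (S k) y)
  + (- (-1) ^ k / (INR (S (S (S k))) * INR (S k))) * Rp a M 0 y.
Proof.
  assert (Hk : 0 <= INR k) by apply pos_INR.
  unfold Rp. rewrite (conv_main (fP a M) (fP_cont a M)
     (fun x => 1 * (/ (2 * INR (S (S (S k)))) * chebP (S (S (S k))) x + - / (2 * INR (S k)) * chebP (S k) x)
               + (- (-1) ^ k / (INR (S (S (S k))) * INR (S k))) * chebP 0 x)
     (fun x => 1 * (/ (2 * INR (S (S (S k)))) * dT (S (S (S k))) x + - / (2 * INR (S k)) * dT (S k) x)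
               + (- (-1) ^ k / (INR (S (S (S k))) * INR (S k))) * dT 0 x)
     (chebP (S (S k)))).
  - rewrite Dc_lin; try (intros; apply fP_cont); try (intros; apply chebP_cont).
    rewrite Dc_lin; try (intros; apply fP_cont); try (intros; apply chebP_cont). reflexivity.
    intros; apply cont_plus; apply cont_mult; try apply continuous_const; apply chebP_cont.
  - apply polyD_lin. apply polyD_lin; apply chebP_poly. apply chebP_poly.
  - rewrite !chebP_m1. simpl pow. rewrite !S_INR. field. split; lra.
  - intros x. unfold dT. rewrite (idTU' k x). rewrite !S_INR. field. split; lra.
Qed.

Lemma cheb_eq (m : nat) (x : R) : -1 <= x <= 1 -> cheb m x = chebP m x.
Proof.
  intros Hx. revert m. apply (rec_eq (fun m => cheb m x) (fun m => chebP m x) x).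
  - intros m. unfold cheb. rewrite !S_INR.
    set (t := acos x). rewrite <- (cos_acos x Hx) at 1. fold t.
    replace ((INR m + 1 + 1) * t) with ((INR m + 1) * t + t) by ring.
    replace (INR m * t) with ((INR m + 1) * t - t) by ring.
    rewrite cos_plus, cos_minus. ring.
  - intros m. reflexivity.
  - unfold cheb. simpl. rewrite Rmult_0_l. apply cos_0.
  - unfold cheb. simpl. rewrite Rmult_1_l. apply cos_acos; auto.
Qed.

Lemma fM_eq a M x : -1 <= x <= 1 -> fM a M x = fP a M x.
Proof. intros Hx. unfold fM, fP. apply sum_eq. intros; rewrite cheb_eq; auto. Qed.

Lemma Rt_eq a M n y : -1 <= y <= 1 -> Rtilde a M n y = Rp a M n y.
Proof.
  intros Hy. unfold Rtilde, Rp.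
  rewrite <- subst_conv by (intros; first [apply fP_cont | apply chebP_cont]).
  apply RInt_ext_R. intros t Ht.
  rewrite Rmin_left in Ht by lra. rewrite Rmax_right in Ht by lra.
  rewrite fM_eq by lra. rewrite cheb_eq by lra. reflexivity.
Qed.

Lemma RInt_Rt_eq a M n y : -1 <= y <= 1 ->
  RInt (fun s => Rtilde a M n s) (-1) y = RInt (fun s => Rp a M n s) (-1) y.
Proof.
  intros Hy. apply RInt_ext_R. intros t Ht.
  rewrite Rmin_left in Ht by lra. rewrite Rmax_right in Ht by lra.
  apply Rt_eq; lra.
Qed.

Lemma RInt_fM_eq a M y : -1 <= y <= 1 ->
  RInt (fun t => fM a M t) (-1) y = RInt (fP a M) (-1) y.
Proof.
  intros Hy. apply RInt_ext_R. intros t Ht.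
  rewrite Rmin_left in Ht by lra. rewrite Rmax_right in Ht by lra.
  apply fM_eq; lra.
Qed.

Theorem theorem2p2 (M : nat) (a : nat -> R) (y : R) (hy : -1 <= y <= 1) :
  Rtilde a M 0 y = RInt (fun t => fM a M t) (-1) y /\
  Rtilde a M 1 y = RInt (fun s => Rtilde a M 0 s) (-1) y - Rtilde a M 0 y /\
  Rtilde a M 2 y = 4 * RInt (fun s => Rtilde a M 1 s) (-1) y + Rtilde a M 0 y /\
  (forall n : nat, (2 <= n)%nat ->
     Rtilde a M (S n) y =
       2 * INR (S n) * RInt (fun s => Rtilde a M n s) (-1) y
       + INR (S n) / (INR n - 1) * Rtilde a M (n - 1) y
       + 2 * (-1) ^ n / (INR n - 1) * RInt (fun t => fM a M t) (-1) y).
Proof.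
  rewrite !RInt_Rt_eq by exact hy. rewrite RInt_fM_eq by exact hy.
  rewrite !Rt_eq by exact hy.
  split; [|split; [|split]].
  - apply Rp0.
  - rewrite P1. apply eqR; ring.
  - rewrite P2. apply eqR; field.
  - intros n Hn. destruct n as [|[|k]]; try lia.
    replace (S (S k) - 1)%nat with (S k) by lia.
    rewrite RInt_Rt_eq by exact hy. rewrite !Rt_eq by exact hy.
    rewrite Pn. rewrite <- Rp0.
    assert (Hk : 0 <= INR k) by apply pos_INR.
    simpl pow. rewrite !S_INR. apply eqR. field. split; lra.
Qed.
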